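(* Let $m\ge 3$ and let $K\subset\mathbb{R}^m$ be a self-dual, smooth, strictly convex cone. Then there is no proper cone $L\subset\mathbb{R}^m$ such that $K$ is an $L$-isotone projection set.
   Context: $\mathbb{R}^m$ carries the standard inner product. A proper cone is a closed convex cone $K$ that is pointed ($K\cap(-K)=\{0\}$) and generating ($K-K=\mathbb{R}^m$). The dual cone is $K^*=\{y:\langle x,y\rangle\ge0\ \forall x\in K\}$; $K$ is self-dual if $K=K^*$. For $u\neq 0$, $H(u,0)=\{x:\langle u,x\rangle=0\}$ and $H_-(u,0)=\{x:\langle u,x\rangle\le0\}$; $H(u,0)$ is a supporting hyperplane of $K$ if $K\subset H_-(u,0)$. A proper cone $K$ is strictly convex if $\dim(K\cap H(u,0))\le1$ for every supporting hyperplane $H(u,0)$ of $K$; a strictly convex proper cone is smooth if through each boundary point $x\neq0$ of $K$ there is exactly one supporting hyperplane. For a cone $L$, $x\le_L y$ means $y-x\in L$; $P_K$ is the metric projection onto $K$, and $K$ is an $L$-isotone projection set if $x\le_L y$ implies $P_Kx\le_L P_Ky$. *)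

(* Defs.v *)
From HB Require Import structures.
From mathcomp Require Import all_boot all_order all_algebra.
From mathcomp Require Import all_classical all_reals all_analysis.
Import numFieldNormedType.Exports.
Set Implicit Arguments. Unset Strict Implicit. Unset Printing Implicit Defensive.
Import Order.TTheory GRing.Theory Num.Theory.
Local Open Scope classical_set_scope.
Local Open Scope ring_scope.

Section ConeDefs.
Variables (R : realType) (m : nat).
Implicit Types (K L : set 'rV[R]_m) (x y u : 'rV[R]_m).

Definition dotp x y : R := \sum_(i < m) x ord0 i * y ord0 i.

Definition closed_convex_cone K : Prop :=
  [/\ closed K, K 0,
      (forall x y, K x -> K y -> K (x + y)) &
      (forall (t : R) x, 0 <= t -> K x -> K (t *: x))].

Definition pointed K : Prop := forall x, K x -> K (- x) -> x = 0.
Definition generating K : Prop :=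
  forall z, exists x y, [/\ K x, K y & z = x - y].

Definition proper_cone K : Prop :=
  [/\ closed_convex_cone K, pointed K & generating K].

Definition dual_cone K : set 'rV[R]_m :=
  [set y | forall x, K x -> 0 <= dotp x y].
Definition self_dual K : Prop := K = dual_cone K.

Definition hyperplane u : set 'rV[R]_m := [set x | dotp u x = 0].
Definition halfspace_le u : set 'rV[R]_m := [set x | dotp u x <= 0].

Definition supporting K u : Prop := u != 0 /\ K `<=` halfspace_le u.

(* dim S <= k : the linear span of S (= affine hull, when 0 \in S) has
   dimension at most k, i.e. every finite family of vectors of S has rank <= k *)
Definition dim_le (S : set 'rV[R]_m) (k : nat) : Prop :=
  forall n (A : 'M[R]_(n, m)), (forall i, S (row i A)) -> (\rank A <= k)%N.

Definition strictly_convex_cone K : Prop :=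
  proper_cone K /\
  forall u, supporting K u -> dim_le (K `&` hyperplane u) 1.

Definition boundary_pt K x : Prop := K x /\ ~ (interior K) x.

Definition smooth_cone K : Prop :=
  strictly_convex_cone K /\
  forall x, boundary_pt K x -> x != 0 ->
    exists u, [/\ supporting K u, hyperplane u x &
      forall u', supporting K u' -> hyperplane u' x ->
                 hyperplane u' = hyperplane u].

Definition cone_le L x y : Prop := L (y - x).

Definition is_metric_proj K x p : Prop :=
  K p /\ forall y, K y -> dotp (x - p) (x - p) <= dotp (x - y) (x - y).

Definition isotone_projection_set L K : Prop :=
  forall x y p q, cone_le L x y -> is_metric_proj K x p ->
    is_metric_proj K y q -> cone_le L p q.

End ConeDefs.

(* Main.v *)
Require Import Defs.
From HB Require Import structures.
From mathcomp Require Import all_boot all_order all_algebra.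
From mathcomp Require Import all_classical all_reals all_analysis.
From mathcomp Require Import ring lra.
Import numFieldNormedType.Exports.
Import Order.TTheory GRing.Theory Num.Theory.
Local Open Scope classical_set_scope.
Local Open Scope ring_scope.
Set Implicit Arguments. Unset Strict Implicit. Unset Printing Implicit Defensive.

Section Dot.
Variables (R : realType) (m : nat).
Implicit Types (x y z : 'rV[R]_m).

Lemma dotpC x y : dotp x y = dotp y x.
Proof. by apply: eq_bigr => i _; rewrite mulrC. Qed.
Lemma dotpDl x y z : dotp (x + y) z = dotp x z + dotp y z.
Proof. by rewrite /dotp -big_split; apply: eq_bigr => i _; rewrite mxE mulrDl. Qed.
Lemma dotpZl a x y : dotp (a *: x) y = a * dotp x y.
Proof. by rewrite /dotp mulr_sumr; apply: eq_bigr => i _; rewrite mxE mulrA. Qed.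
Lemma dotpNl x y : dotp (- x) y = - dotp x y.
Proof. by rewrite -scaleN1r dotpZl mulN1r. Qed.
Lemma dotpBl x y z : dotp (x - y) z = dotp x z - dotp y z.
Proof. by rewrite dotpDl dotpNl. Qed.
Lemma dotpDr x y z : dotp z (x + y) = dotp z x + dotp z y.
Proof. by rewrite dotpC dotpDl !(dotpC z). Qed.
Lemma dotpZr a x y : dotp y (a *: x) = a * dotp y x.
Proof. by rewrite dotpC dotpZl dotpC. Qed.
Lemma dotpNr x y : dotp y (- x) = - dotp y x.
Proof. by rewrite dotpC dotpNl dotpC. Qed.
Lemma dotpBr x y z : dotp z (x - y) = dotp z x - dotp z y.
Proof. by rewrite dotpDr dotpNr. Qed.
Lemma dotp0l x : dotp 0 x = 0.
Proof. by rewrite /dotp big1 // => i _; rewrite mxE mul0r. Qed.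
Lemma dotp0r x : dotp x 0 = 0.
Proof. by rewrite dotpC dotp0l. Qed.
Lemma dotp_ge0 x : 0 <= dotp x x.
Proof. by apply: sumr_ge0 => i _; rewrite -expr2 sqr_ge0. Qed.
Lemma dotp_eq0 x : dotp x x = 0 -> x = 0.
Proof.
move=> /psumr_eq0P H; apply/matrixP => i j; rewrite mxE (ord1 i).
have H0 : forall k : 'I_m, true -> 0 <= x ord0 k * x ord0 k.
  by move=> k _; rewrite -expr2 sqr_ge0.
have /eqP := H H0 j isT.
by rewrite mulf_eq0 orbb => /eqP.
Qed.
Lemma coord_le x i : x ord0 i ^+ 2 <= dotp x x.
Proof.
rewrite /dotp (bigD1 i) //= expr2 lerDl; apply: sumr_ge0 => k _.
by rewrite -expr2 sqr_ge0.
Qed.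
Lemma CS x y : dotp x y ^+ 2 <= dotp x x * dotp y y.
Proof.
have [y0|yp] := eqVneq (dotp y y) 0.
  by rewrite (dotp_eq0 y0) dotp0r dotp0l expr2 !mulr0.
have yy := dotp_ge0 y.
have := dotp_ge0 (dotp y y *: x - dotp x y *: y).
rewrite !(dotpBl, dotpBr, dotpZl, dotpZr) (dotpC y x) => H.
have yy' : 0 < dotp y y by rewrite lt_def yp yy.
nra.
Qed.
End Dot.

Section Top.
Variables (R : realType) (m : nat).

Lemma cont_id : continuous (fun u : 'rV[R]_m => u).
Proof. by move=> u; exact: cvg_id. Qed.

Lemma cont_dotp (f g : 'rV[R]_m -> 'rV[R]_m) :
  continuous f -> continuous g -> continuous (fun u => dotp (f u) (g u)).
Proof.
move=> cf cg; rewrite /dotp.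
apply: continuous_big.
  exact: add_continuous.
move=> i _ u; apply: continuousM.
  exact: (continuous_comp (cf u) (@coord_continuous R 1 m ord0 i (f u))).
exact: (continuous_comp (cg u) (@coord_continuous R 1 m ord0 i (g u))).
Qed.

Lemma bnd_dotp (C : set 'rV[R]_m) (B : R) :
  (forall y, C y -> dotp y y <= B) -> bounded_set C.
Proof.
move=> bC.
  rewrite /= /bounded_near; near=> M => y /bC yB.
  rewrite /= [leLHS]/Num.Def.normr /= mx_normrE.
  apply: bigmax_le => [|[i j] _]; first by near: M; apply: nbhs_pinfty_ge; rewrite num_real.
  rewrite (ord1 i) /=.
  have c2 := coord_le y j.
  have : `|y ord0 j| <= 1 + B.
    have [h|h] := lerP `|y ord0 j| 1.
      have : 0 <= dotp y y by exact: dotp_ge0.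
      lra.
    have : `|y ord0 j| ^+ 2 = y ord0 j ^+ 2 by rewrite real_normK ?num_real.
    nra.
  move=> h; apply: (le_trans h); near: M; apply: nbhs_pinfty_ge; rewrite num_real.
Unshelve. all: by end_near.
Qed.

Lemma ex_min (C : set 'rV[R]_m) (g : 'rV[R]_m -> R) (B : R) (y0 : 'rV[R]_m) :
  closed C -> (forall y, C y -> dotp y y <= B) -> C y0 -> continuous g ->
  exists2 c, C c & forall t, C t -> g c <= g t.
Proof.
move=> clC bC Cy0 cg.
have cpt : compact C by apply: bounded_closed_compact => //; exact: bnd_dotp bC.
have [c Cc H] := @EVT_min_rV R m g C (ex_intro _ y0 Cy0) cpt (@continuous_subspaceT _ _ C g cg).
exists c; first by rewrite inE in Cc.
by move=> t Ct; apply: H; rewrite inE.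
Qed.
End Top.

Section Cone.
Variables (R : realType) (m : nat) (K : set 'rV[R]_m).
Hypothesis hK : closed_convex_cone K.
Hypothesis hsd : self_dual K.
Implicit Types (x y z a b p : 'rV[R]_m).

Lemma K0 : K 0. Proof. by case: hK. Qed.
Lemma KD x y : K x -> K y -> K (x + y). Proof. by case: hK => _ _ H _; apply: H. Qed.
Lemma KZ t x : 0 <= t -> K x -> K (t *: x). Proof. by case: hK => _ _ _ H; apply: H. Qed.
Lemma Kcl : closed K. Proof. by case: hK. Qed.
Lemma Kdot x y : K x -> K y -> 0 <= dotp x y.
Proof. move=> Kx Ky; have H : dual_cone K y by rewrite -hsd.
exact: H. Qed.
Lemma Kdual y : (forall x, K x -> 0 <= dotp x y) -> K y.
Proof. by move=> H; rewrite hsd. Qed.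

Lemma quad (c d : R) : 0 <= d ->
  (forall s, 0 < s -> s <= 1 -> 0 <= s * (2 * c) + s ^+ 2 * d) -> 0 <= c.
Proof.
move=> d0 H; rewrite leNgt; apply/negP => c0.
have dc : 0 < d - c by lra.
pose s := (- c) / (d - c).
have hs : s * (d - c) = - c by rewrite /s mulfVK // gt_eqF.
have s0 : 0 < s by rewrite /s divr_gt0 // ?oppr_gt0.
have s1 : s <= 1 by nra.
have := H s s0 s1; nra.
Qed.

Lemma moreau a b : K a -> K b -> dotp a b = 0 -> is_metric_proj K (a - b) a.
Proof.
move=> Ka Kb ab; split => // y Ky.
have := Kdot Ky Kb; have := dotp_ge0 (a - y).
rewrite !(dotpBl, dotpBr) (dotpC b a) (dotpC y a) (dotpC b y) ab; lra.
Qed.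

Lemma proj_var x p : is_metric_proj K x p -> K (p - x) /\ dotp p (p - x) = 0.
Proof.
move=> [Kp Hp].
have H1 : forall k, K k -> 0 <= dotp k (p - x).
  move=> k Kk; apply: (quad (dotp_ge0 k)) => s s0 _.
  have := Hp (p + s *: k) (KD Kp (KZ (ltW s0) Kk)).
  rewrite !(dotpBl, dotpBr, dotpDl, dotpDr, dotpZl, dotpZr) (dotpC x p) (dotpC k x)
    (dotpC k p) expr2.
  lra.
split; first exact: Kdual.
have := H1 p Kp.
have : 0 <= dotp p (x - p).
  apply: (quad (dotp_ge0 p)) => s s0 s1.
  have := Hp ((1 - s) *: p) (KZ _ Kp); rewrite subr_ge0 => /(_ s1).
  rewrite !(dotpBl, dotpBr, dotpDl, dotpDr, dotpZl, dotpZr) (dotpC x p) expr2.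
  lra.
rewrite !dotpBr; lra.
Qed.

Lemma proj_ex x : exists p, is_metric_proj K x p.
Proof.
pose B := 4 * dotp x x.
pose C := K `&` [set y | dotp y y <= B].
have clC : closed C.
  apply: closedI; first exact: Kcl.
  have -> : [set y | dotp y y <= B] = (fun y => dotp y y) @^-1` [set r | r <= B] by [].
  apply: preimage_closed; last exact: closed_le.
  by move=> y _; apply: (cont_dotp (@cont_id R m) (@cont_id R m)).
have C0 : C 0 by split; [exact: K0 | rewrite /= dotp0l /B; have := dotp_ge0 x; lra].
have cg : continuous (fun y => dotp (x - y) (x - y)).
  have cxy : continuous (fun y : 'rV[R]_m => x - y).
    by move=> y; apply: continuousB; [exact: cst_continuous | exact: cvg_id].
  exact: (cont_dotp cxy cxy).
have [c [Kc _] Hc] := ex_min clC (fun y (Cy : C y) => proj2 Cy) C0 cg.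
exists c; split => // y Ky.
have [yB|yB] := lerP (dotp y y) B.
  by apply: Hc.
apply: (le_trans (Hc 0 C0)).
have := CS x y; have := dotp_ge0 x; move: yB.
rewrite /B !(dotpBl, dotpBr) dotp0l dotp0r (dotpC y x) => yB xx cs.
have z0 := dotp0l (0 : 'rV[R]_m).
suff : 2 * dotp x y <= dotp y y by rewrite z0; lra.
have [h|h] := lerP (dotp x y) 0; first by lra.
have yy0 : 0 < dotp y y by lra.
rewrite leNgt; apply/negP => h2.
have : dotp y y * dotp y y < (2 * dotp x y) * (2 * dotp x y) by nra.
nra.
Qed.
End Cone.
Section LinAlg.
Variables (R : realType) (m : nat).
Implicit Types (x y z a b : 'rV[R]_m).

Lemma dotp_mx x y : dotp x y = (x *m y^T) ord0 ord0.
Proof. by rewrite mxE; apply: eq_bigr => i _; rewrite mxE. Qed.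

Lemma ker2 a b : (3 <= m)%N -> exists2 f, f != 0 & dotp f a = 0 /\ dotp f b = 0.
Proof.
move=> m3.
pose M := (col_mx a b)^T.
have rk : (\rank M <= 2)%N.
  by rewrite mxrank_tr; apply: leq_trans (rank_leq_row _) _.
have kr : kermx M != 0.
  rewrite -mxrank_eq0 mxrank_ker; rewrite subn_eq0 -ltnNge.
  by apply: leq_trans m3; rewrite ltnS.
have [i ri] : exists i, row i (kermx M) != 0.
  apply/existsP; move: kr; apply: contraR; rewrite negb_exists => /forallP H.
  by apply/eqP/row_matrixP => i; rewrite row0; apply/eqP; move: (H i); rewrite negbK.
exists (row i (kermx M)) => //.
have : row i (kermx M) *m M = 0 by rewrite -row_mul mulmx_ker row0.
rewrite /M tr_col_mx mul_mx_row => /eqP; rewrite -row_mx0 => /eqP /eq_row_mx [h1 h2].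
by rewrite !dotp_mx h1 h2 !mxE.
Qed.

Lemma row_col2 x y (i : 'I_(1 + 1)) : row i (col_mx x y) = x \/ row i (col_mx x y) = y.
Proof.
case: (splitP i) => j hj.
  have -> : i = lshift 1 j by apply/val_inj.
  by left; rewrite rowKu row_id.
have -> : i = rshift 1 j by apply/val_inj.
by right; rewrite rowKd row_id.
Qed.

Lemma rank1_par x y : x != 0 -> (\rank (col_mx x y) <= 1)%N -> exists t, y = t *: x.
Proof.
move=> x0 rk.
have sx : (x <= col_mx x y)%MS by rewrite -addsmxE addsmxSl.
have sy : (y <= col_mx x y)%MS by rewrite -addsmxE addsmxSr.
have := mxrank_leqif_sup sx; rewrite rank_rV x0 => /leqifP.
case: ifP => [hx _|_ /=]; last by rewrite ltnNge rk.
have /submxP [D ->] := submx_trans sy hx.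
exists (D ord0 ord0).
by rewrite {1}[D]mx11_scalar mul_scalar_mx.
Qed.
End LinAlg.
Lemma small (R : realType) (mu c : R) : 0 < mu -> 0 <= c -> exists2 t, 0 < t & t ^+ 2 * c < mu.
Proof.
move=> mu0 c0.
pose t := mu / ((mu + 1) * (c + 1)).
have ht : t * ((mu + 1) * (c + 1)) = mu by rewrite /t mulfVK // mulf_neq0 // gt_eqF //; lra.
have t0 : 0 < t by rewrite /t divr_gt0 // mulr_gt0 //; lra.
exists t => //.
have e1 : t * (mu + 1) * c + t * (mu + 1) = mu by apply: (eq_trans _ ht); ring.
have e2 : 0 <= t * (mu + 1) * c by rewrite mulr_ge0 // mulr_ge0 //; lra.
have e3 : 0 < t * (mu + 1) by rewrite mulr_gt0 //; lra.
have t1 : t <= 1 by nra.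
have e4 : t * c <= t * (mu + 1) * c by nra.
have e5 : t * c < mu by lra.
have e6 : 0 <= t * c by rewrite mulr_ge0 //; lra.
nra.
Qed.

Section Main.
Variables (R : realType) (m : nat) (K : set 'rV[R]_m).
Hypothesis hK : closed_convex_cone K.
Hypothesis hsd : self_dual K.
Hypothesis hsc : forall u, supporting K u -> dim_le (K `&` hyperplane u) 1.
Hypothesis m3 : (3 <= m)%N.
Implicit Types (x y z a b p q w : 'rV[R]_m).
Let K0 := K0 hK.
Let KD := KD hK.
Let KZ := KZ hK.
Let Kcl := Kcl hK.
Let Kdot := Kdot hsd.
Let Kdual := Kdual hsd.
Let moreau := moreau hsd.
Let proj_var := proj_var hK hsd.
Let proj_ex := proj_ex hK.

Lemma dotp_neq0 x : x != 0 -> 0 < dotp x x.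
Proof.
move=> x0; rewrite lt_def dotp_ge0 andbT; apply/eqP => /dotp_eq0 h.
by rewrite h eqxx in x0.
Qed.

Lemma SC w x y : K w -> w != 0 -> K x -> K y -> dotp w x = 0 -> dotp w y = 0 ->
  (\rank (col_mx x y) <= 1)%N.
Proof.
move=> Kw w0 Kx Ky wx wy.
have sup : supporting K (- w).
  split; first by rewrite oppr_eq0.
  by move=> v Kv; rewrite /halfspace_le /= dotpNl oppr_le0 (dotpC w) Kdot.
apply: (hsc sup) => i.
by case: (row_col2 x y i) => ->; split => //; rewrite /hyperplane /= dotpNl ?wx ?wy oppr0.
Qed.

Lemma SCpar w x y : K w -> w != 0 -> K x -> K y -> dotp w x = 0 -> dotp w y = 0 ->
  x != 0 -> exists t, y = t *: x.
Proof. by move=> ? ? ? ? ? ? x0; apply: rank1_par x0 _; apply: (SC (w := w)). Qed.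

Lemma eq_le_one (r : R) : r = 1 -> r <= 1.
Proof. by move=> ->. Qed.

Lemma STRICT a1 a2 : K a1 -> K a2 -> (1 < \rank (col_mx a1 a2))%N ->
  exists2 mu, 0 < mu & forall u, K u -> mu * dotp u u <= dotp (a1 + a2) u ^+ 2.
Proof.
move=> K1 K2 rk.
pose s := a1 + a2.
have Ks : K s by exact: KD.
pose S1 := K `&` [set u | dotp u u = 1].
have norm1 : forall u, K u -> dotp u u != 0 ->
    S1 ((Num.sqrt (dotp u u))^-1 *: u) /\
    Num.sqrt (dotp u u) ^+ 2 = dotp u u.
  move=> u Ku uu.
  have uu0 : 0 < dotp u u by rewrite lt_def uu dotp_ge0.
  have sq : Num.sqrt (dotp u u) ^+ 2 = dotp u u by rewrite sqr_sqrtr // ltW.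
  have r0 : Num.sqrt (dotp u u) != 0 by rewrite gt_eqF // sqrtr_gt0.
  split => //; split; first by apply: KZ => //; rewrite invr_ge0 sqrtr_ge0.
  by rewrite /= dotpZl dotpZr mulrA -expr2 exprVn sq mulVf.
case: (pselect (exists u0, S1 u0)) => [[u0 S1u0]|noS].
  have clS : closed S1.
    apply: closedI; first exact: Kcl.
    have -> : [set u | dotp u u = 1] = (fun y => dotp y y) @^-1` [set r | r = 1] by [].
    apply: preimage_closed; last exact: closed_eq.
    by move=> y _; apply: (cont_dotp (@cont_id R m) (@cont_id R m)).
  have cg : continuous (fun u => dotp s u).
    have cs : continuous (fun _ : 'rV[R]_m => s) by move=> y; exact: cst_continuous.
    exact: (cont_dotp cs (@cont_id R m)).
  have [c [Kc cc] Hc] := ex_min clS (B := 1) (fun y (Cy : S1 y) => eq_le_one (proj2 Cy)) S1u0 cg.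
  have sc0 : 0 < dotp s c.
    rewrite lt_def Kdot // andbT; apply/eqP => h.
    have h1 := Kdot K1 Kc; have h2 := Kdot K2 Kc.
    move: h; rewrite /s dotpDl => h.
    have e1 : dotp c a1 = 0 by rewrite dotpC; lra.
    have e2 : dotp c a2 = 0 by rewrite dotpC; lra.
    have c0 : c != 0 by apply/eqP => c0; move: cc; rewrite /= c0 dotp0l => /eqP; rewrite eq_sym oner_eq0.
    by move: rk; rewrite ltnNge (SC Kc c0 K1 K2 e1 e2).
  exists (dotp s c ^+ 2); first by rewrite exprn_gt0.
  move=> u Ku; have [uu|uu] := eqVneq (dotp u u) 0.
    by rewrite uu mulr0 sqr_ge0.
  have [S1u sq] := norm1 u Ku uu.
  have := Hc _ S1u; rewrite dotpZr.
  have r0 : 0 < Num.sqrt (dotp u u) by rewrite sqrtr_gt0 lt_def uu dotp_ge0.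
  move: sq; set r := Num.sqrt (dotp u u) => sq h.
  have h1 : r * dotp s c <= dotp s u.
    have rn : r != 0 by rewrite gt_eqF.
    by have := ler_wpM2l (ltW r0) h; rewrite mulrA mulfV // mul1r.
  have h0 : 0 <= r * dotp s c by rewrite mulr_ge0 // ltW.
  rewrite -sq; nra.
exists 1 => // u Ku; have [uu|uu] := eqVneq (dotp u u) 0.
  by rewrite uu mulr0 sqr_ge0.
by exfalso; apply: noS; exists ((Num.sqrt (dotp u u))^-1 *: u); case: (norm1 u Ku uu).
Qed.

Lemma INT s mu : K s -> 0 < mu -> (forall u, K u -> mu * dotp u u <= dotp s u ^+ 2) ->
  forall v, dotp v v < mu -> K (s + v).
Proof.
move=> Ks mu0 Hs v vv.
have [p Hp] := proj_ex (s + v).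
have [Kq pq] := proj_var Hp.
move: Kq pq; set q := p - (s + v) => Kq pq.
have e : s + v = p - q by rewrite /q subKr.
clearbody q.
have [q0|q0] := eqVneq q 0.
  by rewrite e q0 subr0; case: Hp.
have qq := dotp_neq0 q0.
have h := Hs q Kq.
have sq := Kdot Ks Kq.
have e2 : dotp (s + v) q = - dotp q q by rewrite e dotpBl pq sub0r.
rewrite dotpDl in e2.
have cs := CS v q.
have h1 : dotp s q <= - dotp v q by have := dotp_ge0 q; lra.
have h2 : dotp s q ^+ 2 <= dotp v q ^+ 2 by nra.
nra.
Qed.

Lemma pair_ex k : K k -> k != 0 ->
  exists a b, [/\ K a, K b, a != 0, b != 0 & dotp a b = 0].
Proof.
move=> Kk k0.
have [f f0 [fk _]] := ker2 k k m3.
have [p Hp] := proj_ex f.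
have [Kb pb] := proj_var Hp.
move: Kb pb; set b := p - f => Kb pb.
have ef : f = p - b by rewrite /b subKr.
clearbody b.
have [p0|p0] := eqVneq p 0.
  exists k, (- f); split => //.
  - by have -> : - f = b by rewrite ef p0 sub0r opprK.
  - by rewrite oppr_eq0.
  - by rewrite dotpNr dotpC fk oppr0.
have [b0|b0] := eqVneq b 0.
  exists k, f; split => //; last by rewrite dotpC.
  by rewrite ef b0 subr0; case: Hp.
by exists p, b; split => //; case: Hp.
Qed.

Lemma noKL (L : set 'rV[R]_m) : pointed L -> isotone_projection_set L K ->
  K `<=` L -> forall k, K k -> k != 0 -> False.
Proof.
move=> pL iso KL k Kk k0.
have P0 : is_metric_proj K 0 0 by have := moreau K0 K0 (dotp0l 0); rewrite subr0.
have LK : L `<=` K.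
  move=> w Lw.
  have [p Hp] := proj_ex w.
  have [Kb pb] := proj_var Hp.
  move: Kb pb; set b := p - w => Kb pb.
  have Hb : is_metric_proj K (- w) b.
    have := moreau Kb (proj1 Hp) (eq_trans (dotpC _ _) pb).
    by have -> : b - p = - w by rewrite /b addrAC subrr add0r.
  have := iso (- w) 0 b 0; rewrite /cone_le sub0r opprK => /(_ Lw Hb P0).
  rewrite sub0r => Lb.
  have b0 := pL b (KL b Kb) Lb.
  have -> : w = p by apply/eqP; rewrite -subr_eq0 -opprB oppr_eq0; apply/eqP.
  by case: Hp.
have [a [b [Ka Kb a0 b0 ab]]] := pair_ex Kk k0.
have [g g0 [ga gb]] := ker2 a b m3.
have rk : (1 < \rank (col_mx a b))%N.
  rewrite ltnNge; apply/negP => /(rank1_par a0) [t bt].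
  move: ab; rewrite bt dotpZr => /eqP; rewrite mulf_eq0 => /orP [/eqP t0|/eqP aa].
    by move: b0; rewrite bt t0 scale0r eqxx.
  by move: (dotp_neq0 a0); rewrite aa ltxx.
have [mu mu0 Hmu] := STRICT Ka Kb rk.
have [t t0 tg] := small mu0 (dotp_ge0 g).
pose z := 2%:R *: a + t *: g.
have zK : ~ K z.
  move=> Kz.
  have bz : dotp b z = 0 by rewrite /z dotpDr !dotpZr (dotpC b a) ab (dotpC b g) gb !mulr0 addr0.
  have [l hl] := SCpar Kb b0 Ka Kz (eq_trans (dotpC _ _) ab) bz a0.
  have : dotp g z = dotp g (l *: a) by rewrite hl.
  rewrite /z dotpDr !dotpZr ga !mulr0 add0r => /eqP; rewrite mulf_eq0 => /orP [/eqP t00|/eqP gg].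
    by move: t0; rewrite t00 ltxx.
  by move: (dotp_neq0 g0); rewrite gg ltxx.
have [p Hp] := proj_ex z.
have [Kq pq] := proj_var Hp.
move: Kq pq; set q := p - z => Kq pq.
have ez : z = p - q by rewrite /q subKr.
clearbody q.
have q0 : q != 0.
  by apply/eqP => q0; apply: zK; rewrite ez q0 subr0; case: Hp.
have ne : dotp (p - 2%:R *: a) (p - 2%:R *: a) <= dotp (z - 2%:R *: a) (z - 2%:R *: a).
  have aq := Kdot Ka Kq; have qq := dotp_ge0 q.
  rewrite ez !(dotpBl, dotpBr, dotpZl, dotpZr) (dotpC q p) pq (dotpC q a).
  lra.
have zz : dotp (z - 2%:R *: a) (z - 2%:R *: a) = t ^+ 2 * dotp g g.
  rewrite /z addrC addKr dotpZl dotpZr; ring.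
have zt : dotp (z - 2%:R *: a) (z - 2%:R *: a) < mu by rewrite zz.
have Kpab := INT (KD Ka Kb) mu0 Hmu (le_lt_trans ne zt).
have Pab : is_metric_proj K (a - b) a := moreau Ka Kb ab.
have Kp : K p by case: Hp.
have Pp : is_metric_proj K p p by have := moreau Kp K0 (dotp0r p); rewrite subr0.
have e3 : p - (a - b) = a + b + (p - 2%:R *: a).
  by apply/matrixP => i j; rewrite !mxE; ring.
have := iso (a - b) p a p; rewrite /cone_le e3 => /(_ (KL _ Kpab) Pab Pp) /LK Kpa.
have h1 := Kdot Kq Kpa.
have aq := Kdot Ka Kq.
have aq0 : dotp a q = 0.
  move: h1; rewrite dotpBr (dotpC q p) pq (dotpC q a); lra.
have [l ql] := SCpar Ka a0 Kb Kq ab aq0 b0.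
have l0 : l != 0 by apply/eqP => l0; move: q0; rewrite ql l0 scale0r eqxx.
have bp : dotp b p = 0.
  move: pq; rewrite ql dotpZr => /eqP; rewrite mulf_eq0 (negbTE l0) /= => /eqP.
  by rewrite dotpC.
have [n pn] := SCpar Kb b0 Ka Kp (eq_trans (dotpC _ _) ab) bp a0.
have : dotp g z = 0 by rewrite ez pn ql dotpBr !dotpZr ga gb !mulr0 subr0.
rewrite /z dotpDr !dotpZr ga mulr0 add0r => /eqP; rewrite mulf_eq0 => /orP [/eqP t00|/eqP gg].
  by move: t0; rewrite t00 ltxx.
by move: (dotp_neq0 g0); rewrite gg ltxx.
Qed.

Lemma caseA (L : set 'rV[R]_m) : pointed L ->
  (forall x y, L x -> L y -> L (x + y)) ->
  (forall (t : R) x, 0 <= t -> L x -> L (t *: x)) ->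
  isotone_projection_set L K ->
  forall a1 a2, K a1 -> L a1 -> K a2 -> L a2 -> (\rank (col_mx a1 a2) <= 1)%N.
Proof.
move=> pL LD LZ iso a1 a2 K1 L1 K2 L2.
rewrite leqNgt; apply/negP => rk.
have [mu mu0 Hmu] := STRICT K1 K2 rk.
have Ks : K (a1 + a2) by exact: KD.
have Ls : L (a1 + a2) by exact: LD.
have KL : K `<=` L.
  move=> k Kk.
  have [t t0 tk] := small mu0 (dotp_ge0 k).
  have vv : dotp (- (t *: k)) (- (t *: k)) < mu.
    by rewrite dotpNl dotpNr opprK dotpZl dotpZr mulrA -expr2.
  have Ksk := INT Ks mu0 Hmu vv.
  have Ktk : K (t *: k) by apply: KZ => //; exact: ltW.
  have P1 := moreau K0 Ksk (dotp0l _).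
  have P2 := moreau Ktk K0 (dotp0r _).
  have := fun H => iso _ _ _ _ H P1 P2; rewrite /cone_le.
  have -> : t *: k - 0 - (0 - (a1 + a2 + - (t *: k))) = a1 + a2.
    by apply/matrixP => i j; rewrite !mxE; ring.
  move=> /(_ Ls); rewrite subr0 => /(LZ t^-1); rewrite scalerA mulVf ?scale1r ?gt_eqF //.
  by apply; rewrite invr_ge0 ltW.
have [a10|a10] := eqVneq a1 0.
  have [a20|a20] := eqVneq a2 0.
    by move: rk; rewrite a10 a20 col_mx0 mxrank0.
  exact: (noKL pL iso KL K2 a20).
exact: (noKL pL iso KL K1 a10).
Qed.

Lemma ray (L : set 'rV[R]_m) : pointed L ->
  (forall x y, L x -> L y -> L (x + y)) ->
  (forall (t : R) x, 0 <= t -> L x -> L (t *: x)) ->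
  isotone_projection_set L K ->
  exists a0, forall a, K a -> L a -> exists t : R, a = t *: a0.
Proof.
move=> pL LD LZ iso.
case: (pselect (exists a0, [/\ K a0, L a0 & a0 != 0])) => [[a0 [K0' L0 a00]]|no].
  exists a0 => a Ka La.
  exact: rank1_par a00 (caseA pL LD LZ iso K0' L0 Ka La).
exists 0 => a Ka La; exists 0; rewrite scale0r.
apply/eqP; apply: contraT => a0.
by case: no; exists a.
Qed.
End Main.

Theorem proposition1 (R : realType) (m : nat) (K : set 'rV[R]_m) :
  (3 <= m)%N -> self_dual K -> smooth_cone K ->
  ~ (exists L : set 'rV[R]_m, proper_cone L /\ isotone_projection_set L K).
Proof.
move=> m3 hsd [[[hK pK gK] hsc] _] [L [[hL pL gL] iso]].
case: hL => _ L0 LD LZ.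
pose Ln := [set x : 'rV[R]_m | L (- x)].
have pLn : pointed Ln.
  move=> x; rewrite /Ln /= => h1; rewrite opprK => h2; exact: pL h2 h1.
have LnD : forall x y, Ln x -> Ln y -> Ln (x + y).
  by move=> x y; rewrite /Ln /= => h1 h2; rewrite opprD; apply: LD.
have LnZ : forall (t : R) x, 0 <= t -> Ln x -> Ln (t *: x).
  by move=> t x t0; rewrite /Ln /= => h; rewrite -scalerN; apply: LZ.
have isoLn : isotone_projection_set Ln K.
  move=> x y p q; rewrite /cone_le /Ln /= !opprB => h Px Py.
  exact: (iso y x q p h Py Px).
have [a0 Ha] := ray hK hsd hsc m3 pL LD LZ iso.
have [b0 Hb] := ray hK hsd hsc m3 pLn LnD LnZ isoLn.
have [f f0 [fa fb]] := ker2 a0 b0 m3.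
have P0 : is_metric_proj K 0 0.
  by have := moreau hsd (K0 hK) (K0 hK) (dotp0l 0); rewrite subr0.
have fL : forall w, L w -> dotp f w = 0.
  move=> w Lw.
  have [p Hp] := proj_ex hK w.
  have [Kb pb] := proj_var hK hsd Hp.
  move: Kb pb; set b := p - w => Kb pb.
  have ew : w = p - b by rewrite /b subKr.
  clearbody b.
  have Kp : K p by case: Hp.
  have Hb' : is_metric_proj K (- w) b.
    have := moreau hsd Kb Kp (eq_trans (dotpC _ _) pb).
    by rewrite ew opprB.
  have := iso 0 w 0 p; rewrite /cone_le !subr0 => /(_ Lw P0 Hp) Lp.
  have := iso (- w) 0 b 0; rewrite /cone_le sub0r opprK => /(_ Lw Hb' P0).
  rewrite sub0r => Lnb.
  have [t pt] := Ha p Kp Lp.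
  have [s bs] := Hb b Kb Lnb.
  by rewrite ew pt bs dotpBr !dotpZr fa fb !mulr0 subr0.
have [x [y [Lx Ly fxy]]] := gL f.
have : dotp f f = 0 by rewrite {2}fxy dotpBr !fL // subr0.
by move/dotp_eq0 => h; move: f0; rewrite h eqxx.
Qed.
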